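(* (Intuitionistic modal logic.) For all propositions $A,B,C$: (MP) $\vdash^H_{\mathbf{CPL}} A\supset B$ and $\vdash^H_{\mathbf{CPL}} A$ imply $\vdash^H_{\mathbf{CPL}} B$; and $\vdash^H_{\mathbf{CPL*}} A\supset B$ and $\vdash^H_{\mathbf{CPL*}} A$ imply $\vdash^H_{\mathbf{CPL*}} B$. (I) $A\supset A$; (K) $A\supset B\supset A$; (S) $(A\supset B\supset C)\supset(A\supset B)\supset A\supset C$; ($\bot E$) $\bot\supset A$ — each of these holds under both $\vdash^H_{\mathbf{CPL}}$ and $\vdash^H_{\mathbf{CPL*}}$. (NEC) $\vdash^H_{\mathbf{CPL}} A$ implies $\vdash^H_{\mathbf{CPL}}\Box A$, and $\vdash^H_{\mathbf{CPL*}} A$ implies $\vdash^H_{\mathbf{CPL*}}\Box A$. ($K\Box$) $\Box(A\supset B)\supset\Box A\supset\Box B$ and ($K\Diamond$) $\Box(A\supset B)\supset\Diamond A\supset\Diamond B$ hold under both $\vdash^H_{\mathbf{CPL}}$ and $\vdash^H_{\mathbf{CPL*}}$. ($4\Box$) $\Box A\supset\Box\Box A$ holds under both $\vdash^H_{\mathbf{CPL}}$ and $\vdash^H_{\mathbf{CPL*}}$ when only transitive accessibility relations are considered. ($\Diamond\bot$) $\vdash^H_{\mathbf{CPL*}}\neg\Diamond\bot$. ($4\Diamond$) $\Diamond\Diamond A\supset\Diamond A$ holds under $\vdash^H_{\mathbf{CPL*}}$ when only transitive accessibility relations are considered. Moreover, $\neg\Diamond\bot$ is not an axiom of CPL, and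 $(\Diamond A\supset\Box B)\supset\Box(A\supset B)$ is an axiom of neither CPL nor CPL*.
   Context: A set $W$ of worlds with a binary accessibility relation $\prec$ is converse well-founded if there is no infinite chain $w_0\prec w_1\prec\cdots$; $\prec^*$ denotes its reflexive–transitive closure. Propositions: $A,B,C ::= Q\mid\bot\mid A\supset B\mid\Diamond A\mid\Box A$ ($Q$ atomic); $\neg A$ abbreviates $A\supset\bot$, and $\supset$ associates to the right. A context $\Gamma$ is a finite collection of judgments $A[w]$. Given such $(W,\prec)$, $\Gamma\vdash_{\mathbf{CPL}}A[w]$ is defined one world at a time (provability at $w$ after provability at all worlds reachable from $w$ by one or more $\prec$-steps) as the least relation closed under: (hyp) $\Gamma,A[w]\vdash A[w]$; ($\bot E$) $\Gamma\vdash\bot[w]$ implies $\Gamma\vdash C[w]$; ($\supset I$) $\Gamma,A[w]\vdash B[w]$ implies $\Gamma\vdash A\supset B[w]$; ($\supset E$) $\Gamma\vdash A\supset B[w]$ and $\Gamma\vdash A[w]$ imply $\Gamma\vdash B[w]$; ($\Diamond I$) $w\prec w'$ and $\Gamma\vdash A[w']$ imply $\Gamma\vdash\Diamond A[w]$; ($\Box I$) if $\Gamma\vdash A[w']$ for all $w'$ with $w\prec w'$ then $\Gamma\vdash\Box A[w]$; ($\Diamond E$) if $\Gamma\vdash\Diamond A[w]$ and for all $w'$ with $w\prec w'$, $\Gamma\vdash A[w']$ implies $\Gamma\vdash C[w]$, then $\Gamma\vdash C[w]$; ($\Box E$) if $\Gamma\vdash\Box A[w]$ and ($\Gamma\vdash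 A[w']$ for all $w'$ with $w\prec w'$) implies $\Gamma\vdash C[w]$, then $\Gamma\vdash C[w]$. $\Gamma\vdash_{\mathbf{CPL*}}A[w]$ is defined identically except that: ($\bot E$) $w'\prec^* w$ and $\Gamma\vdash\bot[w]$ imply $\Gamma\vdash C[w']$; ($\Diamond E$) if $w''\prec^* w$, $\Gamma\vdash\Diamond A[w]$, and for all $w'$ with $w\prec w'$, $\Gamma\vdash A[w']$ implies $\Gamma\vdash C[w'']$, then $\Gamma\vdash C[w'']$; ($\Box E$) if $w''\prec^* w$, $\Gamma\vdash\Box A[w]$, and ($\Gamma\vdash A[w']$ for all $w'$ with $w\prec w'$) implies $\Gamma\vdash C[w'']$, then $\Gamma\vdash C[w'']$. $\vdash^H_{\mathbf{CPL}}A$ means: for every converse well-founded $(W,\prec)$, every $w\in W$ and every context $\Gamma$, $\Gamma\vdash_{\mathbf{CPL}}A[w]$; likewise $\vdash^H_{\mathbf{CPL*}}A$ with $\vdash_{\mathbf{CPL*}}$. ''Holds when only transitive accessibility relations are considered'' means the same quantification restricted to transitive $\prec$. A schema is ''not an axiom'' of CPL (resp. CPL* ) if there exist a converse well-founded $(W,\prec)$, a world $w$, a context $\Gamma$, and an instance $A$ of the schema with $\Gamma\nvdash_{\mathbf{CPL}}A[w]$ (resp. $\Gamma\nvdash_{\mathbf{CPL*}}A[w]$). *)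

(* Defs.v *)
(* Intuitionistic modal logic CPL / CPL* (provability defined
   one world at a time over a converse well-founded frame). *)
From Stdlib Require Import List Relations Wellfounded.
Import ListNotations.

Set Implicit Arguments.

Inductive form : Type :=
| Atom : nat -> form
| Bot : form
| Imp : form -> form -> form
| Dia : form -> form
| Box : form -> form.

Definition Neg (A : form) : form := Imp A Bot.

Section Provability.
Variables (W : Type) (R : W -> W -> Prop).

Definition ctx := list (form * W).

(* Provability at the current world x, given provability P at worlds
   strictly reachable from x (already defined, stratification).
   Rules of CPL. *)
Inductive cpl_step (x : W) (P : W -> ctx -> form -> Prop) : ctx -> form -> Prop :=
| cpl_hyp : forall G A, In (A, x) G -> cpl_step x P G A
| cpl_botE : forall G C, cpl_step x P G Bot -> cpl_step x P G C
| cpl_impI : forall G A B, cpl_step x P ((A, x) :: G) B -> cpl_step x P G (Imp A B)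
| cpl_impE : forall G A B, cpl_step x P G (Imp A B) -> cpl_step x P G A -> cpl_step x P G B
| cpl_diaI : forall G A y, R x y -> P y G A -> cpl_step x P G (Dia A)
| cpl_boxI : forall G A, (forall y, R x y -> P y G A) -> cpl_step x P G (Box A)
| cpl_diaE : forall G A C, cpl_step x P G (Dia A) ->
    (forall y, R x y -> P y G A -> cpl_step x P G C) -> cpl_step x P G C
| cpl_boxE : forall G A C, cpl_step x P G (Box A) ->
    ((forall y, R x y -> P y G A) -> cpl_step x P G C) -> cpl_step x P G C.

(* Rules of CPL*.  A premise "w'' ≺* w" is split into the two cases
   w = w'' (premise at the current world) and w'' ≺+ w (premise at an
   already-defined world). *)
Inductive cpls_step (x : W) (P : W -> ctx -> form -> Prop) : ctx -> form -> Prop :=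
| cpls_hyp : forall G A, In (A, x) G -> cpls_step x P G A
| cpls_botE_here : forall G C, cpls_step x P G Bot -> cpls_step x P G C
| cpls_botE_there : forall G C z, clos_trans W R x z -> P z G Bot -> cpls_step x P G C
| cpls_impI : forall G A B, cpls_step x P ((A, x) :: G) B -> cpls_step x P G (Imp A B)
| cpls_impE : forall G A B, cpls_step x P G (Imp A B) -> cpls_step x P G A -> cpls_step x P G B
| cpls_diaI : forall G A y, R x y -> P y G A -> cpls_step x P G (Dia A)
| cpls_boxI : forall G A, (forall y, R x y -> P y G A) -> cpls_step x P G (Box A)
| cpls_diaE_here : forall G A C, cpls_step x P G (Dia A) ->
    (forall y, R x y -> P y G A -> cpls_step x P G C) -> cpls_step x P G C
| cpls_diaE_there : forall G A C z, clos_trans W R x z -> P z G (Dia A) ->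
    (forall y, R z y -> P y G A -> cpls_step x P G C) -> cpls_step x P G C
| cpls_boxE_here : forall G A C, cpls_step x P G (Box A) ->
    ((forall y, R x y -> P y G A) -> cpls_step x P G C) -> cpls_step x P G C
| cpls_boxE_there : forall G A C z, clos_trans W R x z -> P z G (Box A) ->
    ((forall y, R z y -> P y G A) -> cpls_step x P G C) -> cpls_step x P G C.

Definition conv_wf : Prop := well_founded (fun a b => R b a).

Lemma conv_wf_trans : conv_wf -> well_founded (fun a b => clos_trans W R b a).
Proof.
  intro Hwf.
  apply wf_incl with (R2 := clos_trans W (fun a b => R b a)).
  - intros a b H. induction H.
    + apply t_step; assumption.
    + eapply t_trans; eassumption.
  - apply wf_clos_trans. exact Hwf.
Qed.

Definition stratify (step : W -> (W -> ctx -> form -> Prop) -> ctx -> form -> Prop)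
  (Hwf : conv_wf) : W -> ctx -> form -> Prop :=
  Fix (conv_wf_trans Hwf) (fun _ => ctx -> form -> Prop)
    (fun x rec => step x (fun y G A => exists H : clos_trans W R x y, rec y H G A)).

Definition cpl (Hwf : conv_wf) (w : W) (G : ctx) (A : form) : Prop :=
  stratify cpl_step Hwf w G A.

Definition cpls (Hwf : conv_wf) (w : W) (G : ctx) (A : form) : Prop :=
  stratify cpls_step Hwf w G A.

End Provability.

Definition HCPL (A : form) : Prop :=
  forall (W : Type) (R : W -> W -> Prop) (Hwf : conv_wf R) (w : W) (G : ctx W),
    cpl Hwf w G A.

Definition HCPLs (A : form) : Prop :=
  forall (W : Type) (R : W -> W -> Prop) (Hwf : conv_wf R) (w : W) (G : ctx W),
    cpls Hwf w G A.

Definition HCPL_tr (A : form) : Prop :=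
  forall (W : Type) (R : W -> W -> Prop) (Hwf : conv_wf R), transitive W R ->
    forall (w : W) (G : ctx W), cpl Hwf w G A.

Definition HCPLs_tr (A : form) : Prop :=
  forall (W : Type) (R : W -> W -> Prop) (Hwf : conv_wf R), transitive W R ->
    forall (w : W) (G : ctx W), cpls Hwf w G A.

(* Main.v *)
Require Import Defs.
From Stdlib Require Import List Relations Wellfounded FunctionalExtensionality.
Import ListNotations.
Set Implicit Arguments.

Section Unf.
Variables (W : Type) (R : W -> W -> Prop).

Lemma stratify_eq step (Hwf : conv_wf R) x :
  stratify step Hwf x =
  step x (fun y G A => exists _ : clos_trans W R x y, stratify step Hwf y G A).
Proof.
  unfold stratify. rewrite Fix_eq; [reflexivity|].
  intros x0 f g Hfg.
  assert (E : f = g).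
  { apply functional_extensionality_dep; intro y.
    apply functional_extensionality_dep; intro p. apply Hfg. }
  subst; reflexivity.
Qed.

Definition PP (Hwf : conv_wf R) w := fun y G A => exists _ : clos_trans W R w y, cpl Hwf y G A.
Definition PPs (Hwf : conv_wf R) w := fun y G A => exists _ : clos_trans W R w y, cpls Hwf y G A.

Lemma cpl_unf Hwf w G A : cpl Hwf w G A -> cpl_step R w (PP Hwf w) G A.
Proof. unfold cpl; rewrite stratify_eq; exact (fun h => h). Qed.
Lemma cpl_fold Hwf w G A : cpl_step R w (PP Hwf w) G A -> cpl Hwf w G A.
Proof. unfold cpl; rewrite stratify_eq; exact (fun h => h). Qed.
Lemma cpls_unf Hwf w G A : cpls Hwf w G A -> cpls_step R w (PPs Hwf w) G A.
Proof. unfold cpls; rewrite stratify_eq; exact (fun h => h). Qed.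
Lemma cpls_fold Hwf w G A : cpls_step R w (PPs Hwf w) G A -> cpls Hwf w G A.
Proof. unfold cpls; rewrite stratify_eq; exact (fun h => h). Qed.
End Unf.
Arguments cpl_unf {W R Hwf w G A}.
Arguments cpl_fold {W R Hwf w G A}.
Arguments cpls_unf {W R Hwf w G A}.
Arguments cpls_fold {W R Hwf w G A}.

Definition Rb (a b : bool) : Prop := a = false /\ b = true.

Lemma Rb_wf : conv_wf Rb.
Proof.
  unfold conv_wf. intro b. constructor. intros a [Hb Ha]. subst.
  constructor. intros c [H _]. discriminate.
Qed.

Lemma ct_Rb x z : clos_trans bool Rb x z -> Rb x z.
Proof.
  induction 1; [assumption|]. destruct IHclos_trans1, IHclos_trans2; split; congruence.
Qed.

Fixpoint tv (v : nat -> Prop) (f : form) : Prop :=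
  match f with
  | Atom n => v n
  | Bot => False
  | Imp a b => tv v a -> tv v b
  | Dia _ => False
  | Box _ => True
  end.

Lemma dead_sound v P : forall G C, cpl_step Rb true P G C ->
  (forall A, In (A, true) G -> tv v A) -> tv v C.
Proof.
  induction 1; simpl; intros inv.
  - auto.
  - destruct (IHcpl_step inv).
  - intro ha. apply IHcpl_step. intros A' [E|Hin]; [inversion E; subst; auto | auto].
  - exact (IHcpl_step1 inv (IHcpl_step2 inv)).
  - destruct H; discriminate.
  - exact I.
  - destruct (IHcpl_step inv).
  - apply H1; [intros y [d _]; discriminate | exact inv].
Qed.

Lemma dead_sound_s v P : forall G C, cpls_step Rb true P G C ->
  (forall A, In (A, true) G -> tv v A) -> tv v C.
Proof.
  induction 1; simpl; intros inv.
  - auto.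
  - destruct (IHcpls_step inv).
  - destruct (ct_Rb H); discriminate.
  - intro ha. apply IHcpls_step. intros A' [E|Hin]; [inversion E; subst; auto | auto].
  - exact (IHcpls_step1 inv (IHcpls_step2 inv)).
  - destruct H; discriminate.
  - exact I.
  - destruct (IHcpls_step inv).
  - destruct (ct_Rb H); discriminate.
  - apply H1; [intros y [d _]; discriminate | exact inv].
  - destruct (ct_Rb H); discriminate.
Qed.

Lemma dead_transfer P : forall G1 C, cpl_step Rb true P G1 C -> forall G2,
  (forall A, In (A, true) G1 -> In (A, true) G2) -> cpl_step Rb true P G2 C.
Proof.
  induction 1; intros G2 inc.
  - apply cpl_hyp; auto.
  - apply cpl_botE; auto.
  - apply cpl_impI. apply IHcpl_step. intros A' [E|Hin]; [left; exact E | right; auto].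
  - eapply cpl_impE; eauto.
  - destruct H; discriminate.
  - apply cpl_boxI; intros y [d _]; discriminate.
  - apply cpl_diaE with A; [auto|]. intros y [d _]; discriminate.
  - apply cpl_boxE with A; [auto|]. intros _. apply H1; [intros y [d _]; discriminate | auto].
Qed.

Lemma dead_transfer_s P : forall G1 C, cpls_step Rb true P G1 C -> forall G2,
  (forall A, In (A, true) G1 -> In (A, true) G2) -> cpls_step Rb true P G2 C.
Proof.
  induction 1; intros G2 inc.
  - apply cpls_hyp; auto.
  - apply cpls_botE_here; auto.
  - destruct (ct_Rb H); discriminate.
  - apply cpls_impI. apply IHcpls_step. intros A' [E|Hin]; [left; exact E | right; auto].
  - eapply cpls_impE; eauto.
  - destruct H; discriminate.
  - apply cpls_boxI; intros y [d _]; discriminate.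
  - apply cpls_diaE_here with A; [auto|]. intros y [d _]; discriminate.
  - destruct (ct_Rb H); discriminate.
  - apply cpls_boxE_here with A; [auto|]. intros _. apply H1; [intros y [d _]; discriminate | auto].
  - destruct (ct_Rb H); discriminate.
Qed.

Arguments dead_sound v {P G C}. Arguments dead_sound_s v {P G C}.
Arguments dead_transfer {P G1 C}. Arguments dead_transfer_s {P G1 C}.
Fixpoint tw (Q : form -> Prop) (f : form) : Prop :=
  match f with
  | Atom _ => False
  | Bot => False
  | Imp a b => tw Q a -> tw Q b
  | Dia a => Q a
  | Box a => Q a
  end.

Definition Q1 a := cpl Rb_wf true [] a.
Definition Q1s a := cpls Rb_wf true [] a.

Lemma notrue_ext (A : form) (G : ctx bool) :
  (forall B, ~ In (B, true) G) -> forall A', ~ In (A', true) ((A, false) :: G).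
Proof. intros H A' [E|Hin]; [discriminate E | exact (H _ Hin)]. Qed.

Lemma to_empty G A : (forall B, ~ In (B, true) G) -> cpl Rb_wf true G A -> Q1 A.
Proof.
  intros H h. apply cpl_fold. apply (dead_transfer (cpl_unf h)).
  intros B Hin; destruct (H _ Hin).
Qed.
Lemma from_empty G A : Q1 A -> cpl Rb_wf true G A.
Proof.
  intros h. apply cpl_fold. apply (dead_transfer (cpl_unf h)). intros B [].
Qed.
Lemma to_empty_s G A : (forall B, ~ In (B, true) G) -> cpls Rb_wf true G A -> Q1s A.
Proof.
  intros H h. apply cpls_fold. apply (dead_transfer_s (cpls_unf h)).
  intros B Hin; destruct (H _ Hin).
Qed.
Lemma from_empty_s G A : Q1s A -> cpls Rb_wf true G A.
Proof.
  intros h. apply cpls_fold. apply (dead_transfer_s (cpls_unf h)). intros B [].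
Qed.

Arguments to_empty {G A}. Arguments from_empty {G A}.
Arguments to_empty_s {G A}. Arguments from_empty_s {G A}.
Lemma Rft : Rb false true. Proof. split; reflexivity. Qed.

Lemma w_sound : forall G C, cpl_step Rb false (PP Rb_wf false) G C ->
  (forall A, In (A, false) G -> tw Q1 A) -> (forall A, ~ In (A, true) G) -> tw Q1 C.
Proof.
  induction 1; simpl; intros inv nt.
  - auto.
  - destruct (IHcpl_step inv nt).
  - intro ha. apply IHcpl_step; [|apply notrue_ext; exact nt].
    intros A' [E|Hin]; [inversion E; subst; auto | auto].
  - exact (IHcpl_step1 inv nt (IHcpl_step2 inv nt)).
  - destruct H as [_ ->]. destruct H0 as [_ h]. exact (to_empty nt h).
  - destruct (H true Rft) as [_ h]. exact (to_empty nt h).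
  - apply (H1 true Rft); [|exact inv|exact nt].
    exists (t_step _ _ _ _ Rft). apply from_empty. exact (IHcpl_step inv nt).
  - apply H1; [|exact inv|exact nt].
    intros y [_ ->]. exists (t_step _ _ _ _ Rft). apply from_empty. exact (IHcpl_step inv nt).
Qed.

Lemma w_sound_s : forall G C, cpls_step Rb false (PPs Rb_wf false) G C ->
  (forall A, In (A, false) G -> tw Q1s A) -> (forall A, ~ In (A, true) G) -> tw Q1s C.
Proof.
  induction 1; simpl; intros inv nt.
  - auto.
  - destruct (IHcpls_step inv nt).
  - destruct (ct_Rb H) as [_ ->]. destruct H0 as [_ h].
    pose proof (to_empty_s nt h) as h'. unfold Q1s in h'.
    destruct (dead_sound_s (fun _ => False) (cpls_unf h')). intros B [].
  - intro ha. apply IHcpls_step; [|apply notrue_ext; exact nt].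
    intros A' [E|Hin]; [inversion E; subst; auto | auto].
  - exact (IHcpls_step1 inv nt (IHcpls_step2 inv nt)).
  - destruct H as [_ ->]. destruct H0 as [_ h]. exact (to_empty_s nt h).
  - destruct (H true Rft) as [_ h]. exact (to_empty_s nt h).
  - apply (H1 true Rft); [|exact inv|exact nt].
    exists (t_step _ _ _ _ Rft). apply from_empty_s. exact (IHcpls_step inv nt).
  - destruct (ct_Rb H) as [_ ->]. destruct H0 as [_ h].
    pose proof (to_empty_s nt h) as h'. unfold Q1s in h'.
    destruct (dead_sound_s (fun _ => False) (cpls_unf h')). intros B [].
  - apply H1; [|exact inv|exact nt].
    intros y [_ ->]. exists (t_step _ _ _ _ Rft). apply from_empty_s. exact (IHcpls_step inv nt).
  - apply H2; [|exact inv|exact nt].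
    destruct (ct_Rb H) as [_ ->]. intros y [d _]; discriminate.
Qed.

Fixpoint tw2 (f : form) : Prop :=
  match f with
  | Atom _ => False
  | Bot => False
  | Imp a b => tw2 a -> tw2 b
  | Dia a => True
  | Box a => True
  end.

Lemma botctx G A : In (Bot, true) G -> cpl Rb_wf true G A.
Proof. intro H. apply cpl_fold. apply cpl_botE. apply cpl_hyp. exact H. Qed.

Lemma w_sound2 : forall G C, cpl_step Rb false (PP Rb_wf false) G C ->
  (forall A, In (A, false) G -> tw2 A) -> In (Bot, true) G -> tw2 C.
Proof.
  induction 1; simpl; intros inv bt.
  - auto.
  - destruct (IHcpl_step inv bt).
  - intro ha. apply IHcpl_step; [|right; exact bt].
    intros A' [E|Hin]; [inversion E; subst; auto | auto].
  - exact (IHcpl_step1 inv bt (IHcpl_step2 inv bt)).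
  - exact I.
  - exact I.
  - apply (H1 true Rft); [|exact inv|exact bt].
    exists (t_step _ _ _ _ Rft). apply botctx; exact bt.
  - apply H1; [|exact inv|exact bt].
    intros y [_ ->]. exists (t_step _ _ _ _ Rft). apply botctx; exact bt.
Qed.

Theorem theorem6 :
  (* (MP) *)
  (forall A B : form, HCPL (Imp A B) -> HCPL A -> HCPL B) /\
  (forall A B : form, HCPLs (Imp A B) -> HCPLs A -> HCPLs B) /\
  (* (I), (K), (S), (bot E) *)
  (forall A : form, HCPL (Imp A A) /\ HCPLs (Imp A A)) /\
  (forall A B : form, HCPL (Imp A (Imp B A)) /\ HCPLs (Imp A (Imp B A))) /\
  (forall A B C : form,
     HCPL (Imp (Imp A (Imp B C)) (Imp (Imp A B) (Imp A C))) /\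
     HCPLs (Imp (Imp A (Imp B C)) (Imp (Imp A B) (Imp A C)))) /\
  (forall A : form, HCPL (Imp Bot A) /\ HCPLs (Imp Bot A)) /\
  (* (NEC) *)
  (forall A : form, HCPL A -> HCPL (Box A)) /\
  (forall A : form, HCPLs A -> HCPLs (Box A)) /\
  (* (K box), (K dia) *)
  (forall A B : form,
     HCPL (Imp (Box (Imp A B)) (Imp (Box A) (Box B))) /\
     HCPLs (Imp (Box (Imp A B)) (Imp (Box A) (Box B)))) /\
  (forall A B : form,
     HCPL (Imp (Box (Imp A B)) (Imp (Dia A) (Dia B))) /\
     HCPLs (Imp (Box (Imp A B)) (Imp (Dia A) (Dia B)))) /\
  (* (4 box), transitive frames *)
  (forall A : form,
     HCPL_tr (Imp (Box A) (Box (Box A))) /\ HCPLs_tr (Imp (Box A) (Box (Box A)))) /\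
  (* (dia bot) *)
  HCPLs (Neg (Dia Bot)) /\
  (* (4 dia), CPL*, transitive frames *)
  (forall A : form, HCPLs_tr (Imp (Dia (Dia A)) (Dia A))) /\
  (* not(dia bot) is not an axiom of CPL *)
  (exists (W : Type) (R : W -> W -> Prop) (Hwf : conv_wf R) (w : W) (G : ctx W),
     ~ cpl Hwf w G (Neg (Dia Bot))) /\
  (* (dia A -> box B) -> box (A -> B) is an axiom of neither CPL nor CPL* *)
  (exists (W : Type) (R : W -> W -> Prop) (Hwf : conv_wf R) (w : W) (G : ctx W)
          (A B : form),
     ~ cpl Hwf w G (Imp (Imp (Dia A) (Box B)) (Box (Imp A B)))) /\
  (exists (W : Type) (R : W -> W -> Prop) (Hwf : conv_wf R) (w : W) (G : ctx W)
          (A B : form),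
     ~ cpls Hwf w G (Imp (Imp (Dia A) (Box B)) (Box (Imp A B)))).
Proof.
  split; [|split; [|split; [|split; [|split; [|split; [|split; [|split; [|split; [|split; [|split; [|split; [|split; [|split; [|split]]]]]]]]]]]]]].
  - intros A B H1 H2 W R Hwf w G. apply cpl_fold.
    apply cpl_impE with A; apply cpl_unf; [apply H1|apply H2].
  - intros A B H1 H2 W R Hwf w G. apply cpls_fold.
    apply cpls_impE with A; apply cpls_unf; [apply H1|apply H2].
  - intros A; split; intros W R Hwf w G.
    + apply cpl_fold, cpl_impI, cpl_hyp; simpl; auto.
    + apply cpls_fold, cpls_impI, cpls_hyp; simpl; auto.
  - intros A B; split; intros W R Hwf w G.
    + apply cpl_fold, cpl_impI, cpl_impI, cpl_hyp; simpl; auto.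
    + apply cpls_fold, cpls_impI, cpls_impI, cpls_hyp; simpl; auto.
  - intros A B C; split; intros W R Hwf w G.
    + apply cpl_fold, cpl_impI, cpl_impI, cpl_impI.
      apply cpl_impE with B.
      * apply cpl_impE with A; apply cpl_hyp; simpl; auto.
      * apply cpl_impE with A; apply cpl_hyp; simpl; auto.
    + apply cpls_fold, cpls_impI, cpls_impI, cpls_impI.
      apply cpls_impE with B.
      * apply cpls_impE with A; apply cpls_hyp; simpl; auto.
      * apply cpls_impE with A; apply cpls_hyp; simpl; auto.
  - intros A; split; intros W R Hwf w G.
    + apply cpl_fold, cpl_impI, cpl_botE, cpl_hyp; simpl; auto.
    + apply cpls_fold, cpls_impI, cpls_botE_here, cpls_hyp; simpl; auto.
  - intros A H W R Hwf w G. apply cpl_fold, cpl_boxI; intros y Hy.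
    exists (t_step _ _ _ _ Hy); apply H.
  - intros A H W R Hwf w G. apply cpls_fold, cpls_boxI; intros y Hy.
    exists (t_step _ _ _ _ Hy); apply H.
  - intros A B; split; intros W R Hwf w G.
    + apply cpl_fold, cpl_impI, cpl_impI.
      apply cpl_boxE with (Imp A B); [apply cpl_hyp; simpl; auto|intro HAB].
      apply cpl_boxE with A; [apply cpl_hyp; simpl; auto|intro HA].
      apply cpl_boxI; intros y Hy.
      destruct (HAB y Hy) as [c1 h1]; destruct (HA y Hy) as [c2 h2].
      exists c1. apply cpl_fold. apply cpl_impE with A; apply cpl_unf; assumption.
    + apply cpls_fold, cpls_impI, cpls_impI.
      apply cpls_boxE_here with (Imp A B); [apply cpls_hyp; simpl; auto|intro HAB].
      apply cpls_boxE_here with A; [apply cpls_hyp; simpl; auto|intro HA].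
      apply cpls_boxI; intros y Hy.
      destruct (HAB y Hy) as [c1 h1]; destruct (HA y Hy) as [c2 h2].
      exists c1. apply cpls_fold. apply cpls_impE with A; apply cpls_unf; assumption.
  - intros A B; split; intros W R Hwf w G.
    + apply cpl_fold, cpl_impI, cpl_impI.
      apply cpl_boxE with (Imp A B); [apply cpl_hyp; simpl; auto|intro HAB].
      apply cpl_diaE with A; [apply cpl_hyp; simpl; auto|intros y Hy [c h]].
      apply cpl_diaI with y; [exact Hy|]. exists c.
      destruct (HAB y Hy) as [c1 h1].
      apply cpl_fold. apply cpl_impE with A; apply cpl_unf; assumption.
    + apply cpls_fold, cpls_impI, cpls_impI.
      apply cpls_boxE_here with (Imp A B); [apply cpls_hyp; simpl; auto|intro HAB].
      apply cpls_diaE_here with A; [apply cpls_hyp; simpl; auto|intros y Hy [c h]].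
      apply cpls_diaI with y; [exact Hy|]. exists c.
      destruct (HAB y Hy) as [c1 h1].
      apply cpls_fold. apply cpls_impE with A; apply cpls_unf; assumption.
  - intros A; split; intros W R Hwf Htr w G.
    + apply cpl_fold, cpl_impI.
      apply cpl_boxE with A; [apply cpl_hyp; simpl; auto|intro HA].
      apply cpl_boxI; intros y Hy. exists (t_step _ _ _ _ Hy).
      apply cpl_fold, cpl_boxI; intros z Hz. exists (t_step _ _ _ _ Hz).
      destruct (HA z (Htr _ _ _ Hy Hz)) as [_ h]; exact h.
    + apply cpls_fold, cpls_impI.
      apply cpls_boxE_here with A; [apply cpls_hyp; simpl; auto|intro HA].
      apply cpls_boxI; intros y Hy. exists (t_step _ _ _ _ Hy).
      apply cpls_fold, cpls_boxI; intros z Hz. exists (t_step _ _ _ _ Hz).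
      destruct (HA z (Htr _ _ _ Hy Hz)) as [_ h]; exact h.
  - intros W R Hwf w G. apply cpls_fold, cpls_impI.
    apply cpls_diaE_here with Bot; [apply cpls_hyp; simpl; auto|intros y Hy [c h]].
    apply cpls_botE_there with y; [exact c|]. exists c; exact h.
  - intros A W R Hwf Htr w G. apply cpls_fold, cpls_impI.
    apply cpls_diaE_here with (Dia A); [apply cpls_hyp; simpl; auto|intros y Hy [c h]].
    apply cpls_diaE_there with A y; [exact c| exists c; exact h|].
    intros z Hz [c2 h2]. apply cpls_diaI with z; [exact (Htr _ _ _ Hy Hz)|].
    exists c2; exact h2.
  - exists bool, Rb, Rb_wf, false, [(Bot, true)]. intro H.
    pose proof (w_sound2 (cpl_unf H)) as T. simpl in T.
    apply T; [intros A [E|[]]; discriminate E | left; reflexivity | exact I].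
  - exists bool, Rb, Rb_wf, false, [], (Atom 0), (Atom 1). intro H.
    pose proof (w_sound (cpl_unf H)) as T. simpl in T.
    assert (T2 : Q1 (Imp (Atom 0) (Atom 1))).
    { apply T; [intros A []|intros A []|].
      intro hd; exfalso. unfold Q1 in hd. apply (dead_sound (fun _ => False) (cpl_unf hd)); intros B []. }
    unfold Q1 in T2. pose proof (dead_sound (fun n => n = 0) (cpl_unf T2)) as T3. simpl in T3.
    discriminate (T3 (fun _ (b:False) => match b with end) eq_refl).
  - exists bool, Rb, Rb_wf, false, [], (Atom 0), (Atom 1). intro H.
    pose proof (w_sound_s (cpls_unf H)) as T. simpl in T.
    assert (T2 : Q1s (Imp (Atom 0) (Atom 1))).
    { apply T; [intros A []|intros A []|].
      intro hd; exfalso. unfold Q1s in hd. apply (dead_sound_s (fun _ => False) (cpls_unf hd)); intros B []. }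
    unfold Q1s in T2. pose proof (dead_sound_s (fun n => n = 0) (cpls_unf T2)) as T3. simpl in T3.
    discriminate (T3 (fun _ (b:False) => match b with end) eq_refl).
Qed.
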